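(* Let $V_{\mathrm{total}}\ge0$, $B_{\mathrm{total}}>0$, $R^S_{\mathrm{total}}>0$, $F_{\mathrm{total}}>0$. Problem (P1): minimize $\max_u T_u(B_u,R_u^S,F_u,\eta_u)$ over $B_u>0$, $R_u^S>0$, $F_u>0$, $\eta_u\in[0,1]$ ($u=1,\dots,U$) subject to $\sum_uV_u(B_u,R_u^S,F_u,\eta_u)\le V_{\mathrm{total}}$, $\sum_uB_u\le B_{\mathrm{total}}$, $\sum_uR_u^S\le R^S_{\mathrm{total}}$, $\sum_uF_u\le F_{\mathrm{total}}$. Problem (P2): minimize $\max_uT_u^{\eta\text{-opt}}(B_u,R_u^S,F_u)$ over $B_u>0$, $R_u^S>0$, $F_u>0$ subject to $\sum_uV_u^{\eta\text{-opt}}(B_u,R_u^S,F_u)\le V_{\mathrm{total}}$, $\sum_uB_u\le B_{\mathrm{total}}$, $\sum_uR_u^S\le R^S_{\mathrm{total}}$, $\sum_uF_u\le F_{\mathrm{total}}$. Then the optimal values (infima) of (P1) and (P2) are equal.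
   Context: There are users $u=1,\dots,U$, each with constants $D_u>0$, $r_u>0$, $\rho_u>0$, $\zeta_u\in(0,1)$. For $B_u>0$, $R_u^S>0$, $F_u>0$, $\eta_u\in[0,1]$, write $c_u=B_ur_u$ and define $T_u(B_u,R_u^S,F_u,\eta_u)$ and $V_u(B_u,R_u^S,F_u,\eta_u)$ piecewise: (a) if $\eta_uc_u\ge F_u/\rho_u$, $\zeta_uF_u/\rho_u+(1-\eta_u)c_u\ge R_u^S$, $F_u/\rho_u\ge\frac{\eta_uR_u^S}{\zeta_u\eta_u+1-\eta_u}$: $T_u=\frac{D_u}{R_u^S}(\zeta_u\eta_u+1-\eta_u)$, $V_u=\frac{D_u}{c_u}[c_u-R_u^S-(1-\zeta_u)\frac{F_u}{\rho_u}]$; (b) if $\eta_uc_u\ge F_u/\rho_u$, $\zeta_uF_u/\rho_u+(1-\eta_u)c_u\ge R_u^S$, $F_u/\rho_u<\frac{\eta_uR_u^S}{\zeta_u\eta_u+1-\eta_u}$: $T_u=\frac{\eta_uD_u\rho_u}{F_u}$, $V_u=\frac{D_u}{c_u}[c_u-R_u^S-(1-\zeta_u)\frac{F_u}{\rho_u}]$; (c) if $\eta_uc_u\ge F_u/\rho_u$, $\zeta_uF_u/\rho_u+(1-\eta_u)c_u< R_u^S$: $T_u=\frac{\eta_uD_u\rho_u}{F_u}$, $V_u=\frac{D_u}{c_u}(\eta_uc_u-\frac{F_u}{\rho_u})$; (d) if $\eta_uc_u< F_u/\rho_u$, $(\zeta_u\eta_u+1-\eta_u)c_u\ge R_u^S$: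 $T_u=\frac{D_u}{R_u^S}(\zeta_u\eta_u+1-\eta_u)$, $V_u=\frac{D_u}{c_u}[(\zeta_u\eta_u+1-\eta_u)c_u-R_u^S]$; (e) if $\eta_uc_u< F_u/\rho_u$, $(\zeta_u\eta_u+1-\eta_u)c_u< R_u^S$: $T_u=\frac{D_u}{c_u}$, $V_u=0$. The functions $T_u^{\eta\text{-opt}}(B_u,R_u^S,F_u)$ and $V_u^{\eta\text{-opt}}(B_u,R_u^S,F_u)$ are defined by six exhaustive cases (with $c_u=B_ur_u$): 1. $c_u<R_u^S$: $T^{\eta\text{-opt}}_u=\frac{D_u}{c_u}$, $V^{\eta\text{-opt}}_u=0$. 2. $R_u^S\le c_u<\frac{R_u^S}{\zeta_u}$, $\frac{F_u}{\rho_u}<\frac{c_u-R_u^S}{1-\zeta_u}$: $T^{\eta\text{-opt}}_u=\frac{D_u\rho_u}{F_u(1-\zeta_u)+\rho_uR_u^S}$, $V^{\eta\text{-opt}}_u=\frac{D_u}{c_u}[c_u-R_u^S-(1-\zeta_u)\frac{F_u}{\rho_u}]$. 3. $R_u^S\le c_u<\frac{R_u^S}{\zeta_u}$, $\frac{F_u}{\rho_u}\ge\frac{c_u-R_u^S}{1-\zeta_u}$: $T^{\eta\text{-opt}}_u=\frac{D_u}{c_u}$, $V^{\eta\text{-opt}}_u=0$. 4. $c_u\ge\frac{R_u^S}{\zeta_u}$, $\frac{F_u}{\rho_u}<\frac{R_u^S}{\zeta_u}$: $T^{\eta\text{-opt}}_u=\frac{D_u\rho_u}{F_u(1-\zeta_u)+\rho_uR_u^S}$,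 $V^{\eta\text{-opt}}_u=\frac{D_u}{c_u}[c_u-R_u^S-(1-\zeta_u)\frac{F_u}{\rho_u}]$. 5. $c_u\ge\frac{R_u^S}{\zeta_u}$, $\frac{R_u^S}{\zeta_u}\le\frac{F_u}{\rho_u}<c_u$: $T^{\eta\text{-opt}}_u=\frac{\zeta_uD_u}{R_u^S}$, $V^{\eta\text{-opt}}_u=\frac{D_u}{c_u}[c_u-R_u^S-(1-\zeta_u)\frac{F_u}{\rho_u}]$. 6. $c_u\ge\frac{R_u^S}{\zeta_u}$, $\frac{F_u}{\rho_u}\ge c_u$: $T^{\eta\text{-opt}}_u=\frac{\zeta_uD_u}{R_u^S}$, $V^{\eta\text{-opt}}_u=\frac{D_u}{c_u}(\zeta_uc_u-R_u^S)$. *)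

(* Defs.v *)
From mathcomp Require Import all_boot all_order all_algebra.
From mathcomp Require Import all_classical all_reals.
From mathcomp Require Import ereal.
Set Implicit Arguments. Unset Strict Implicit. Unset Printing Implicit Defensive.
Import Order.TTheory GRing.Theory Num.Theory.
Local Open Scope ring_scope.
Local Open Scope classical_set_scope.

Section Defs.
Variable R : realType.

Definition Tu (D r rho zeta B RS F eta : R) : R :=
  let c := B * r in
  if F / rho <= eta * c then
    if RS <= zeta * F / rho + (1 - eta) * c then
      if eta * RS / (zeta * eta + 1 - eta) <= F / rho
      then D / RS * (zeta * eta + 1 - eta)
      else eta * D * rho / F
    else eta * D * rho / F
  else if RS <= (zeta * eta + 1 - eta) * c
       then D / RS * (zeta * eta + 1 - eta)
       else D / c.

Definition Vu (D r rho zeta B RS F eta : R) : R :=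
  let c := B * r in
  if F / rho <= eta * c then
    if RS <= zeta * F / rho + (1 - eta) * c then
      D / c * (c - RS - (1 - zeta) * (F / rho))
    else D / c * (eta * c - F / rho)
  else if RS <= (zeta * eta + 1 - eta) * c
       then D / c * ((zeta * eta + 1 - eta) * c - RS)
       else 0.

Definition Tu_opt (D r rho zeta B RS F : R) : R :=
  let c := B * r in
  if c < RS then D / c
  else if c < RS / zeta then
    if F / rho < (c - RS) / (1 - zeta)
    then D * rho / (F * (1 - zeta) + rho * RS)
    else D / c
  else if F / rho < RS / zeta
    then D * rho / (F * (1 - zeta) + rho * RS)
  else if F / rho < c then zeta * D / RS
  else zeta * D / RS.

Definition Vu_opt (D r rho zeta B RS F : R) : R :=
  let c := B * r in
  if c < RS then 0
  else if c < RS / zeta then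
    if F / rho < (c - RS) / (1 - zeta)
    then D / c * (c - RS - (1 - zeta) * (F / rho))
    else 0
  else if F / rho < RS / zeta
    then D / c * (c - RS - (1 - zeta) * (F / rho))
  else if F / rho < c then D / c * (c - RS - (1 - zeta) * (F / rho))
  else D / c * (zeta * c - RS).

Definition P1_value (U : nat) (D r rho zeta : 'I_U -> R)
    (Vtot Btot RStot Ftot : R) : \bar R :=
  ereal_inf [set z : \bar R | exists (B RS F eta : 'I_U -> R),
     (forall u, 0 < B u /\ 0 < RS u /\ 0 < F u /\ 0 <= eta u <= 1) /\
      \sum_(u < U) Vu (D u) (r u) (rho u) (zeta u) (B u) (RS u) (F u) (eta u) <= Vtot /\
      \sum_(u < U) B u <= Btot /\
      \sum_(u < U) RS u <= RStot /\
      \sum_(u < U) F u <= Ftot /\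
      z = (\big[Num.max/0]_(u < U)
             Tu (D u) (r u) (rho u) (zeta u) (B u) (RS u) (F u) (eta u))%:E].

Definition P2_value (U : nat) (D r rho zeta : 'I_U -> R)
    (Vtot Btot RStot Ftot : R) : \bar R :=
  ereal_inf [set z : \bar R | exists (B RS F : 'I_U -> R),
     (forall u, 0 < B u /\ 0 < RS u /\ 0 < F u) /\
      \sum_(u < U) Vu_opt (D u) (r u) (rho u) (zeta u) (B u) (RS u) (F u) <= Vtot /\
      \sum_(u < U) B u <= Btot /\
      \sum_(u < U) RS u <= RStot /\
      \sum_(u < U) F u <= Ftot /\
      z = (\big[Num.max/0]_(u < U)
             Tu_opt (D u) (r u) (rho u) (zeta u) (B u) (RS u) (F u))%:E].

End Defs.

(* Main.v *)
Require Import Defs.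
From mathcomp Require Import all_boot all_order all_algebra.
From mathcomp Require Import all_classical all_reals.
From mathcomp Require Import ereal.
From mathcomp Require Import ring lra.
Import Order.TTheory GRing.Theory Num.Theory.
Local Open Scope ring_scope.

Section Gen.
Variable R : realType.
Implicit Types D c f s z e : R.

Definition T0 D c f s z e : R :=
  if f <= e * c then
    if s <= z * f + (1 - e) * c then
      if e * s / (z * e + 1 - e) <= f
      then D * (z * e + 1 - e) / s
      else e * D / f
    else e * D / f
  else if s <= (z * e + 1 - e) * c
       then D * (z * e + 1 - e) / s
       else D / c.

Definition Y0 c f s z e : R :=
  if f <= e * c then
    if s <= z * f + (1 - e) * c then c - s - (1 - z) * f
    else e * c - f
  else if s <= (z * e + 1 - e) * c
       then (z * e + 1 - e) * c - s
       else 0.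

Definition Topt0 D c f s z : R :=
  if c < s then D / c
  else if c < s / z then
    if f < (c - s) / (1 - z) then D / ((1 - z) * f + s) else D / c
  else if f < s / z then D / ((1 - z) * f + s)
  else if f < c then z * D / s
  else z * D / s.

Definition W0 c f s z : R :=
  if c < s then 0
  else if c < s / z then
    if f < (c - s) / (1 - z) then c - s - (1 - z) * f else 0
  else if f < s / z then c - s - (1 - z) * f
  else if f < c then c - s - (1 - z) * f
  else z * c - s.

Definition eopt c f s z : R :=
  if c < s then 0
  else if c < s / z then
    if f < (c - s) / (1 - z) then f / ((1 - z) * f + s) else (c - s) / ((1 - z) * c)
  else if f < s / z then f / ((1 - z) * f + s)
  else 1.

Lemma lef (x y u v : R) : 0 < y -> 0 < v -> (x / y <= u / v) = (x * v <= u * y).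
Proof. by move=> hy hv; rewrite ler_pdivrMr // mulrAC ler_pdivlMr. Qed.

Lemma Tu_eq D r rho z B RS F e : rho != 0 -> F != 0 ->
  Tu D r rho z B RS F e = T0 D (B * r) (F / rho) RS z e.
Proof.
move=> h1 h2.
have e1 : z * F / rho = z * (F / rho) by rewrite mulrA.
have e2 : e * D * rho / F = e * D / (F / rho) by rewrite invf_div mulrA.
have e3 : D / RS * (z * e + 1 - e) = D * (z * e + 1 - e) / RS by rewrite mulrAC.
by rewrite /Tu /T0 /= e1 e2 e3.
Qed.

Lemma Vu_eq D r rho z B RS F e :
  Vu D r rho z B RS F e = D / (B * r) * Y0 (B * r) (F / rho) RS z e.
Proof.
have e1 : z * F / rho = z * (F / rho) by rewrite mulrA.
rewrite /Vu /Y0 /= e1.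
by repeat case: ifP => _; rewrite ?mulr0.
Qed.

Lemma Tuopt_eq D r rho z B RS F : 0 < rho -> 0 < F -> 0 < RS -> z < 1 ->
  Tu_opt D r rho z B RS F = Topt0 D (B * r) (F / rho) RS z.
Proof.
move=> h1 h2 h3 h4.
have e1 : D * rho / (F * (1 - z) + rho * RS) = D / ((1 - z) * (F / rho) + RS).
  have hz : 0 < 1 - z by lra.
  have hh : 0 < F * (1 - z) + rho * RS by apply: addr_gt0; apply: mulr_gt0.
  field; rewrite gt_eqF //= gt_eqF //.
  by rewrite mulrC [RS * _]mulrC.
by rewrite /Tu_opt /Topt0 /= e1.
Qed.

Lemma Vuopt_eq D r rho z B RS F :
  Vu_opt D r rho z B RS F = D / (B * r) * W0 (B * r) (F / rho) RS z.
Proof.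
rewrite /Vu_opt /W0 /=.
by repeat case: ifP => _; rewrite ?mulr0.
Qed.

Section Bounds.
Variables (D c f s z e : R).
Hypotheses (hD : 0 < D) (hc : 0 < c) (hf : 0 < f) (hs : 0 < s)
  (hz0 : 0 < z) (hz1 : z < 1) (he0 : 0 <= e) (he1 : e <= 1).

Ltac hy := have hD' := hD; have hc' := hc; have hf' := hf; have hs' := hs;
  have hz0' := hz0; have hz1' := hz1; have he0' := he0; have he1' := he1.

Lemma ha : 0 < z * e + 1 - e.
Proof. hy. have : 0 <= (1 - e) * (1 - z) by apply: mulr_ge0; lra. nra. Qed.

Lemma T0_lb : D / c <= T0 D c f s z e /\ D * (z * e + 1 - e) / s <= T0 D c f s z e
  /\ e * D / f <= T0 D c f s z e.
Proof.
have hA := ha. hy.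
rewrite /T0 (ler_pdivrMr _ _ hA).
case: (lerP f (e * c)) => h1; [case: (lerP s (z * f + (1 - e) * c)) => h2;
  [case: (lerP (e * s) (f * (z * e + 1 - e))) => h3|] | case: (lerP s ((z * e + 1 - e) * c)) => h2 /=].
all: split; [|split]; rewrite ?lef //; try nra.
- have h4 : 0 <= z * (e * c - f) by apply: mulr_ge0; lra.
  have h5 : 0 <= D * ((z * e + 1 - e) * c - s) by apply: mulr_ge0; nra.
  lra.
- have h4 : 0 <= (1 - e) * (e * c - f) by apply: mulr_ge0; lra.
  have h6 : 0 <= e * (s - z * f - (1 - e) * c) by apply: mulr_ge0; lra.
  have h5 : 0 <= D * (e * s - f * (z * e + 1 - e)) by apply: mulr_ge0; nra.
  lra.
- have h4 : 0 <= (z * e + 1 - e) * (f - e * c) by apply: mulr_ge0; lra.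
  have h6 : 0 <= e * ((z * e + 1 - e) * c - s) by apply: mulr_ge0; lra.
  have h5 : 0 <= D * (f * (z * e + 1 - e) - e * s) by apply: mulr_ge0; nra.
  lra.
Qed.

Lemma T0_ub K : D / c <= K -> D * (z * e + 1 - e) / s <= K -> e * D / f <= K ->
  T0 D c f s z e <= K.
Proof. by move=> *; rewrite /T0; repeat case: ifP => _. Qed.

Lemma Y0_ub K : 0 <= K -> c - s - (1 - z) * f <= K -> e * c - f <= K ->
  (z * e + 1 - e) * c - s <= K -> Y0 c f s z e <= K.
Proof. by move=> *; rewrite /Y0; repeat case: ifP => _. Qed.

Lemma Y0_lb : 0 <= Y0 c f s z e /\ c - s - (1 - z) * f <= Y0 c f s z e /\ e * c - f <= Y0 c f s z e /\ (z * e + 1 - e) * c - s <= Y0 c f s z e.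
Proof.
have hA := ha. hy.
rewrite /Y0.
case: (lerP f (e * c)) => h1; [case: (lerP s (z * f + (1 - e) * c)) => h2 /=
  | case: (lerP s ((z * e + 1 - e) * c)) => h2 /=].
- have p1 : 0 <= (1 - z) * (e * c - f) by apply: mulr_ge0; lra.
  (repeat split); lra.
- have p1 : 0 <= (1 - z) * (e * c - f) by apply: mulr_ge0; lra.
  (repeat split); lra.
- have p1 : 0 <= (1 - z) * (f - e * c) by apply: mulr_ge0; lra.
  have p2 : 0 <= z * (f - e * c) by apply: mulr_ge0; lra.
  (repeat split); lra.
- have p1 : 0 <= (1 - z) * (f - e * c) by apply: mulr_ge0; lra.
  (repeat split); lra.
Qed.

Lemma Topt_le : Topt0 D c f s z <= T0 D c f s z e.
Proof.
have hA := ha. hy.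
have [l1 [l2 l3]] := T0_lb.
move: (T0 D c f s z e) l1 l2 l3 => t l1 l2 l3.
have hz2 : 0 < 1 - z by lra.
have hg : 0 < (1 - z) * f + s by have := mulr_gt0 hz2 hf; lra.
have key : D / ((1 - z) * f + s) <= t.
  case: (lerP f (e * ((1 - z) * f + s))) => h.
    apply: le_trans l3; rewrite lef //.
    have : 0 <= D * (e * ((1 - z) * f + s) - f) by apply: mulr_ge0; lra.
    lra.
  apply: le_trans l2; rewrite lef //.
  have : 0 <= D * ((1 - z) * (f - e * ((1 - z) * f + s))).
    by apply: mulr_ge0; [lra|]; apply: mulr_ge0; lra.
  lra.
have key2 : z * D / s <= t.
  apply: le_trans l2; rewrite lef //.
  have : 0 <= D * s * ((1 - e) * (1 - z)).
    apply: mulr_ge0; [apply: mulr_ge0|apply: mulr_ge0]; lra.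
  lra.
by rewrite /Topt0; repeat case: ifP => _.
Qed.

Lemma W0_le : W0 c f s z <= Y0 c f s z e.
Proof.
have hA := ha. hy.
have [l1 [l2 [l3 l4]]] := Y0_lb.
move: (Y0 c f s z e) l1 l2 l3 l4 => t l1 l2 l3 l4.
have k : z * c - s <= t.
  have : 0 <= c * ((1 - e) * (1 - z)).
    apply: mulr_ge0; [lra|apply: mulr_ge0]; lra.
  lra.
by rewrite /W0; repeat case: ifP => _.
Qed.
End Bounds.

Section Ach.
Variables (D c f s z : R).
Hypotheses (hD : 0 < D) (hc : 0 < c) (hf : 0 < f) (hs : 0 < s)
  (hz0 : 0 < z) (hz1 : z < 1).

Ltac hy2 := have hD' := hD; have hc' := hc; have hf' := hf; have hs' := hs;
  have hz0' := hz0; have hz1' := hz1.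

Lemma mid : (1 - z) * f + s <= c -> z * f <= s ->
  let e := f / ((1 - z) * f + s) in
  (0 <= e <= 1) /\ T0 D c f s z e <= D / ((1 - z) * f + s) /\
  Y0 c f s z e <= c - s - (1 - z) * f.
Proof.
move=> hgc hzf e. hy2.
have hz2 : 0 < 1 - z by lra.
have hg : 0 < (1 - z) * f + s by have := mulr_gt0 hz2 hf; lra.
have he : e * ((1 - z) * f + s) = f by rewrite /e divfK // gt_eqF.
have e0 : 0 <= e by rewrite /e divr_ge0 // ltW.
have e1 : e <= 1 by rewrite /e ler_pdivrMr // mul1r; lra.
have ag : (z * e + 1 - e) * ((1 - z) * f + s) = s.
  have -> : (z * e + 1 - e) * ((1 - z) * f + s) =
     ((1 - z) * f + s) - (1 - z) * (e * ((1 - z) * f + s)) by ring.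
  rewrite he; ring.
split; first by rewrite e0 e1.
split.
  apply: T0_ub; rewrite lef //.
  - have : 0 <= D * (c - ((1 - z) * f + s)) by apply: mulr_ge0; lra.
    lra.
  - by rewrite -mulrA ag.
  - have -> : e * D * ((1 - z) * f + s) = D * (e * ((1 - z) * f + s)) by ring.
    by rewrite he mulrC.
apply: Y0_ub.
- have : 0 <= z * f by apply: mulr_ge0; lra.
  lra.
- by [].
- have key : e * c * ((1 - z) * f + s) = c * f.
    by rewrite mulrAC he mulrC.
  have h1 : 0 <= (c - ((1 - z) * f + s)) * (s - z * f) by apply: mulr_ge0; lra.
  have : e * c * ((1 - z) * f + s) <= (c - s + z * f) * ((1 - z) * f + s).
    rewrite key; lra.
  rewrite ler_pM2r //; lra.
- have key : (z * e + 1 - e) * c * ((1 - z) * f + s) = s * c.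
    by rewrite mulrAC ag.
  have h1 : 0 <= (1 - z) * f * (c - ((1 - z) * f + s)).
    apply: mulr_ge0; [apply: mulr_ge0|]; lra.
  have : (z * e + 1 - e) * c * ((1 - z) * f + s) <= (c - (1 - z) * f) * ((1 - z) * f + s).
    rewrite key; lra.
  rewrite ler_pM2r //; lra.
Qed.

Lemma achieve : let e := eopt c f s z in
  (0 <= e <= 1) /\ T0 D c f s z e <= Topt0 D c f s z /\ Y0 c f s z e <= W0 c f s z.
Proof.
hy2.
have hz2 : 0 < 1 - z by lra.
rewrite /eopt /Topt0 /W0.
case: (ltrP c s) => g1 /=.
  split; first by apply/andP; split; lra.
  split.
    apply: T0_ub; rewrite ?lef //.
    - have : 0 <= D * (s - c) by apply: mulr_ge0; lra.
      lra.
    - nra.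
  apply: Y0_ub; nra.
case: (ltrP c (s / z)) => g2 /=.
  have g2' : c * z < s by rewrite -ltr_pdivlMr.
  case: (ltrP f ((c - s) / (1 - z))) => g3 /=.
    have g3' : f * (1 - z) < c - s by rewrite -ltr_pdivlMr.
    have hzf : z * f <= s.
      have : 0 <= z * (c - s - f * (1 - z)) by apply: mulr_ge0; lra.
      move=> p; have : 0 <= (1 - z) * (s - z * f) by lra.
      by rewrite pmulr_rge0 // subr_ge0.
    have [A [B C]] := mid (ltac:(lra)) hzf.
    by split; [|split].
  have g3' : c - s <= f * (1 - z) by rewrite -ler_pdivrMr.
  set e := (c - s) / ((1 - z) * c).
  have hzc : 0 < (1 - z) * c by apply: mulr_gt0.
  have he : e * ((1 - z) * c) = c - s by rewrite /e divfK // gt_eqF.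
  have e0 : 0 <= e by apply: divr_ge0; [lra | exact: ltW hzc].
  have e1 : e <= 1 by rewrite /e ler_pdivrMr // mul1r; lra.
  have ac : (z * e + 1 - e) * c = s.
    have -> : (z * e + 1 - e) * c = c - e * ((1 - z) * c) by ring.
    rewrite he; ring.
  have ecf : e * c <= f.
    have : (1 - z) * (e * c) <= (1 - z) * f.
      have -> : (1 - z) * (e * c) = e * ((1 - z) * c) by ring.
      rewrite he; lra.
    by rewrite ler_pM2l.
  split; first by rewrite e0 e1.
  split.
    apply: T0_ub; rewrite ?lef //.
    - by rewrite -mulrA ac mulrC.
    - have : 0 <= D * (f - e * c) by apply: mulr_ge0; lra.
      lra.
  apply: Y0_ub; lra.
have g2' : s <= c * z by rewrite -ler_pdivrMr.
case: (ltrP f (s / z)) => g3 /=.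
  have g3' : f * z < s by rewrite -ltr_pdivlMr.
  have hgc : (1 - z) * f + s <= c.
    have : z * ((1 - z) * f + s) <= z * c.
      have : 0 <= (1 - z) * (s - f * z) by apply: mulr_ge0; lra.
      lra.
    by rewrite ler_pM2l.
  have [A [B C]] := mid hgc (ltac:(lra)).
  by split; [|split].
have g3' : s <= f * z by rewrite -ler_pdivrMr.
have T1 : T0 D c f s z 1 <= z * D / s.
  apply: T0_ub; rewrite ?lef //.
  - have : 0 <= D * (c * z - s) by apply: mulr_ge0; lra.
    lra.
  - lra.
  - have : 0 <= D * (f * z - s) by apply: mulr_ge0; lra.
    lra.
case: (ltrP f c) => g4 /=; last first.
  split; first by apply/andP; split; lra.
  split; first exact: T1.
  apply: Y0_ub.
  - lra.
  - have : 0 <= (1 - z) * (f - c) by apply: mulr_ge0; lra.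
    lra.
  - lra.
  - lra.
split; first by apply/andP; split; lra.
split; first exact: T1.
apply: Y0_ub.
- have : 0 <= (1 - z) * (c - f) by apply: mulr_ge0; lra.
  lra.
- by [].
- lra.
- have : 0 <= (1 - z) * (c - f) by apply: mulr_ge0; lra.
  lra.
Qed.
End Ach.

Lemma user_lb D r rho z B RS F e : 0 < D -> 0 < r -> 0 < rho -> 0 < z < 1 ->
  0 < B -> 0 < RS -> 0 < F -> 0 <= e <= 1 ->
  Tu_opt D r rho z B RS F <= Tu D r rho z B RS F e /\
  Vu_opt D r rho z B RS F <= Vu D r rho z B RS F e.
Proof.
move=> hD hr hrho /andP[hz0 hz1] hB hRS hF /andP[he0 he1].
have hc : 0 < B * r by apply: mulr_gt0.
have hf : 0 < F / rho by apply: divr_gt0.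
split.
  rewrite Tu_eq ?gt_eqF // Tuopt_eq //.
  exact: Topt_le.
rewrite Vu_eq Vuopt_eq ler_wpM2l //; last exact: W0_le.
by apply: ltW; apply: divr_gt0.
Qed.

Lemma user_ach D r rho z B RS F : 0 < D -> 0 < r -> 0 < rho -> 0 < z < 1 ->
  0 < B -> 0 < RS -> 0 < F ->
  let e := eopt (B * r) (F / rho) RS z in
  0 <= e <= 1 /\
  Tu D r rho z B RS F e = Tu_opt D r rho z B RS F /\
  Vu D r rho z B RS F e = Vu_opt D r rho z B RS F.
Proof.
move=> hD hr hrho hz hB hRS hF e.
have /andP[hz0 hz1] := hz.
have hc : 0 < B * r by apply: mulr_gt0.
have hf : 0 < F / rho by apply: divr_gt0.
have [he [h1 h2]] := @achieve _ _ _ _ _ hD hc hf hRS hz0 hz1.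
have [l1 l2] := @user_lb _ _ _ _ _ _ _ _ hD hr hrho hz hB hRS hF he.
split => //; split; apply: le_anti; rewrite ?l1 ?l2 andbT.
  by rewrite Tu_eq ?gt_eqF // Tuopt_eq.
rewrite Vu_eq Vuopt_eq ler_wpM2l //.
by apply: ltW; apply: divr_gt0.
Qed.

Lemma bigmax_mono (U : nat) (F G : 'I_U -> R) : (forall u, F u <= G u) ->
  \big[Num.max/0]_(u < U) F u <= \big[Num.max/0]_(u < U) G u.
Proof.
move=> h; apply: (big_ind2 (fun a b => a <= b)) => //.
move=> a b c d h1 h2; rewrite ge_max !le_max h1 h2 orbT /=.
by [].
Qed.
End Gen.

Theorem theorem2 (R : realType) (U : nat) (hU : (0 < U)%N)
    (D r rho zeta : 'I_U -> R)
    (hD : forall u, 0 < D u) (hr : forall u, 0 < r u)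
    (hrho : forall u, 0 < rho u) (hzeta : forall u, 0 < zeta u < 1)
    (Vtot Btot RStot Ftot : R)
    (hV : 0 <= Vtot) (hB : 0 < Btot) (hRS : 0 < RStot) (hF : 0 < Ftot) :
  P1_value D r rho zeta Vtot Btot RStot Ftot =
  P2_value D r rho zeta Vtot Btot RStot Ftot.
Proof.
apply: le_anti; apply/andP; split.
  apply: le_ereal_inf => y [B [RS [F [hpos [hv [hb [hrs [hf ->]]]]]]]].
  pose eta u := @eopt R (B u * r u) (F u / rho u) (RS u) (zeta u).
  have ach u := @user_ach _ _ _ _ _ _ _ _ (hD u) (hr u) (hrho u) (hzeta u)
     (hpos u).1 (hpos u).2.1 (hpos u).2.2.
  exists B, RS, F, eta; split.
    move=> u; have [h1 _] := ach u; have [? [? ?]] := hpos u; by [].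
  split.
    rewrite (eq_bigr _ (fun u _ => (ach u).2.2)); exact: hv.
  do 3 (split; first by []).
  by rewrite (eq_bigr _ (fun u _ => (ach u).2.1)).
apply/ereal_infP => y [B [RS [F [eta [hpos [hv [hb [hrs [hf ->]]]]]]]]].
have lb u := @user_lb _ _ _ _ _ _ _ _ _ (hD u) (hr u) (hrho u) (hzeta u)
     (hpos u).1 (hpos u).2.1 (hpos u).2.2.1 (hpos u).2.2.2.
apply: (@le_trans _ _ ((\big[Num.max/0]_(u < U)
    Tu_opt (D u) (r u) (rho u) (zeta u) (B u) (RS u) (F u))%:E)).
  apply: ereal_inf_lbound.
  exists B, RS, F; split.
    by move=> u; have [? [? [? _]]] := hpos u.
  split.
    apply: le_trans hv; apply: ler_sum => u _; exact: (lb u).2.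
  by do 3 (split; first by []).
rewrite lee_fin; apply: bigmax_mono => u; exact: (lb u).1.
Qed.
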